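(* Let $L$ be a finite-dimensional nilpotent Lie superalgebra over $\mathbb{F}$ with $\dim L=(k\mid l)$ and $\dim L'=(r\mid s)$ where $r+s=1$. Then $L$ is capable if and only if either $L\cong H(1,0)\oplus A(k-3\mid l)$ or $L\cong H_{1}\oplus A(k-1\mid l-2)$.
   Context: All algebras are over a field $\mathbb{F}$ of characteristic $\neq 2,3$. A Lie superalgebra is $L=L_{\bar 0}\oplus L_{\bar 1}$ with a graded, graded skew-symmetric bracket satisfying the graded Jacobi identity; $\dim L=(m\mid n)$ means $\dim L_{\bar 0}=m$, $\dim L_{\bar 1}=n$. $L'=[L,L]$, $Z(L)$ is the center. A Lie superalgebra $L$ is capable if $L\cong H/Z(H)$ for some Lie superalgebra $H$. $A(m\mid n)$ denotes the abelian Lie superalgebra of dimension $(m\mid n)$. $H(m,n)$ ($m+n\ge 1$) is the Lie superalgebra with even basis $x_1,\dots,x_{2m},z$, odd basis $y_1,\dots,y_n$, and nonzero brackets $[x_i,x_{m+i}]=z$ ($1\le i\le m$), $[y_j,y_j]=z$ ($1\le j\le n$); it has dimension $(2m+1\mid n)$. $H_m$ ($m\ge1$) is the Lie superalgebra with even basis $x_1,\dots,x_m$, odd basis $y_1,\dots,y_m,z$, and nonzero brackets $[x_j,y_j]=z$ ($1\le j\le m$); it has dimension $(m\mid m+1)$. $\oplus$ denotes direct sum of Lie superalgebras. *)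

(* Defs.v *)
From HB Require Import structures.
From mathcomp Require Import all_boot all_order all_algebra.
Set Implicit Arguments. Unset Strict Implicit. Unset Printing Implicit Defensive.
Import GRing.Theory.
Local Open Scope ring_scope.

Section LieSuper.
Variable F : fieldType.

(* A Lie superalgebra L = L0 (+) L1 with even part V0 and odd part V1.
   br00 : [even, even], br01 : [even, odd] (with [odd, even] y x := - br01 x y),
   br11 : [odd, odd]. *)
Record liesuper (V0 V1 : lmodType F) := LieSuper {
  br00 : V0 -> V0 -> V0;
  br01 : V0 -> V1 -> V1;
  br11 : V1 -> V1 -> V0 }.

Definition lin (U V : lmodType F) (f : U -> V) : Prop :=
  forall (a : F) (u v : U), f (a *: u + v) = a *: f u + f v.

Definition is_liesuper (V0 V1 : lmodType F) (L : liesuper V0 V1) : Prop :=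
  (forall x, lin (br00 L x)) /\ (forall x, lin (fun x' => br00 L x' x)) /\
  (forall x, lin (br01 L x)) /\ (forall y, lin (fun x => br01 L x y)) /\
  (forall y, lin (br11 L y)) /\ (forall y, lin (fun y' => br11 L y' y)) /\
  (forall x x', br00 L x x' = - br00 L x' x) /\
  (forall y y', br11 L y y' = br11 L y' y) /\
  (forall x y z : V0,
     br00 L x (br00 L y z) = br00 L (br00 L x y) z + br00 L y (br00 L x z)) /\
  (forall (x y : V0) (z : V1),
     br01 L x (br01 L y z) = br01 L (br00 L x y) z + br01 L y (br01 L x z)) /\
  (forall (x : V0) (y z : V1),
     br00 L x (br11 L y z) = br11 L (br01 L x y) z + br11 L y (br01 L x z)) /\
  (forall y z w : V1,
     br01 L (br11 L y z) w + br01 L (br11 L z w) y + br01 L (br11 L w y) z = 0).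

Definition brp (V0 V1 : lmodType F) (L : liesuper V0 V1)
    (a b : V0 * V1) : V0 * V1 :=
  (br00 L a.1 b.1 + br11 L a.2 b.2, br01 L a.1 b.2 - br01 L b.1 a.2).

(* Nilpotent: L^{n+1} = 0 for some n, i.e. all left-normed brackets
   [..[[x0,x1],x2],..,xn] of length n+1 vanish. *)
Definition nilpotent (V0 V1 : lmodType F) (L : liesuper V0 V1) : Prop :=
  exists n : nat, forall (x : V0 * V1) (xs : seq (V0 * V1)),
    size xs = n -> foldl (brp L) x xs = (0, 0).

Definition is_derived (V0 V1 : vectType F) (L : liesuper V0 V1)
    (D0 : {vspace V0}) (D1 : {vspace V1}) : Prop :=
  let contains (U0 : {vspace V0}) (U1 : {vspace V1}) :=
    (forall x x' : V0, br00 L x x' \in U0) /\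
    (forall y y' : V1, br11 L y y' \in U0) /\
    (forall (x : V0) (y : V1), br01 L x y \in U1) in
  contains D0 D1 /\
  (forall U0 U1, contains U0 U1 -> (D0 <= U0)%VS /\ (D1 <= U1)%VS).

Definition is_hom (W0 W1 V0 V1 : lmodType F) (H : liesuper W0 W1)
    (L : liesuper V0 V1) (f0 : W0 -> V0) (f1 : W1 -> V1) : Prop :=
  lin f0 /\ lin f1 /\
  (forall x x', f0 (br00 H x x') = br00 L (f0 x) (f0 x')) /\
  (forall x y, f1 (br01 H x y) = br01 L (f0 x) (f1 y)) /\
  (forall y y', f0 (br11 H y y') = br11 L (f1 y) (f1 y')).

Definition isomorphic (W0 W1 V0 V1 : lmodType F) (H : liesuper W0 W1)
    (L : liesuper V0 V1) : Prop :=
  exists (f0 : W0 -> V0) (f1 : W1 -> V1),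
    is_hom H L f0 f1 /\ bijective f0 /\ bijective f1.

Definition in_center0 (W0 W1 : lmodType F) (H : liesuper W0 W1) (w : W0) :=
  (forall x, br00 H w x = 0) /\ (forall y, br01 H w y = 0).
Definition in_center1 (W0 W1 : lmodType F) (H : liesuper W0 W1) (w : W1) :=
  (forall x, br01 H x w = 0) /\ (forall y, br11 H w y = 0).

(* L is capable iff L ~= H / Z(H) for some Lie superalgebra H over F, i.e.
   (first isomorphism theorem) there is a surjective homomorphism H -> L
   whose kernel is exactly Z(H). *)
Definition capable (V0 V1 : lmodType F) (L : liesuper V0 V1) : Prop :=
  exists (W0 W1 : lmodType F) (H : liesuper W0 W1), is_liesuper H /\
  exists (f0 : W0 -> V0) (f1 : W1 -> V1),
    is_hom H L f0 f1 /\
    (forall v, exists w, f0 w = v) /\ (forall v, exists w, f1 w = v) /\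
    (forall w, f0 w = 0 <-> in_center0 H w) /\
    (forall w, f1 w = 0 <-> in_center1 H w).

Definition dsum (V0 V1 W0 W1 : lmodType F) (L : liesuper V0 V1)
    (M : liesuper W0 W1) : liesuper (V0 * W0)%type (V1 * W1)%type :=
  LieSuper (fun a b => (br00 L a.1 b.1, br00 M a.2 b.2))
           (fun a b => (br01 L a.1 b.1, br01 M a.2 b.2))
           (fun a b => (br11 L a.1 b.1, br11 M a.2 b.2)).

Definition Aab (m n : nat) : liesuper 'rV[F]_m 'rV[F]_n :=
  LieSuper (fun _ _ => 0) (fun _ _ => 0) (fun _ _ => 0).

(* H(m,n): even basis x_1..x_{2m}, z (coordinates 'I_(m+m+1), with
   x_i = lshift (lshift i), x_{m+i} = lshift (rshift i), z = last);
   odd basis y_1..y_n; [x_i,x_{m+i}] = z, [y_j,y_j] = z. *)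
Definition Hx (m : nat) (i : 'I_m) : 'I_(m + m + 1) := lshift 1 (lshift m i).
Definition Hxm (m : nat) (i : 'I_m) : 'I_(m + m + 1) := lshift 1 (rshift m i).
Definition Hz (m : nat) : 'I_(m + m + 1) := rshift (m + m) (@ord0 0).

Definition Heis (m n : nat) : liesuper 'rV[F]_(m + m + 1) 'rV[F]_n :=
  LieSuper
    (fun u v : 'rV[F]_(m + m + 1) => (\sum_(i < m) (u ord0 (Hx i) * v ord0 (Hxm i)
                              - u ord0 (Hxm i) * v ord0 (Hx i)))
                *: delta_mx ord0 (Hz m))
    (fun _ _ => 0)
    (fun y y' : 'rV[F]_n => (\sum_(j < n) y ord0 j * y' ord0 j) *: delta_mx ord0 (Hz m)).

(* H_m: even basis x_1..x_m, odd basis y_1..y_m, z (coordinates 'I_(m+1),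
   y_j = lshift j, z = last); [x_j, y_j] = z. *)
Definition Hm (m : nat) : liesuper 'rV[F]_m 'rV[F]_(m + 1) :=
  LieSuper
    (fun _ _ => 0)
    (fun (u : 'rV[F]_m) (w : 'rV[F]_(m + 1)) => (\sum_(j < m) u ord0 j * w ord0 (lshift 1 j))
                *: delta_mx ord0 (rshift m (@ord0 0)))
    (fun _ _ => 0).

End LieSuper.

(* Main.v *)
Require Import Defs.
From HB Require Import structures.
From mathcomp Require Import all_boot all_order all_algebra.
From mathcomp Require Import ring.
From Stdlib Require Import Classical.
Import GRing.Theory.
Local Open Scope ring_scope.
Set Implicit Arguments. Unset Strict Implicit.

Section Lin.
Variable F : fieldType.

Definition flin (U : lmodType F) (g : U -> F) :=
  forall a u v, g (a *: u + v) = a * g u + g v.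

Section L1.
Variables (U V : lmodType F) (f : U -> V) (hf : lin f).
Lemma linD u v : f (u + v) = f u + f v.
Proof. by have := hf 1 u v; rewrite !scale1r. Qed.
Lemma lin0 : f 0 = 0.
Proof. have h := linD 0 0; rewrite addr0 -[in LHS](addr0 (f 0)) in h; exact: esym (addrI _ h). Qed.
Lemma linZ a u : f (a *: u) = a *: f u.
Proof. by have := hf a u 0; rewrite !addr0 lin0 addr0. Qed.
Lemma linN u : f (- u) = - f u.
Proof. by rewrite -scaleN1r linZ scaleN1r. Qed.
Lemma linB u v : f (u - v) = f u - f v.
Proof. by rewrite linD linN. Qed.
Lemma lin_sum n (g : 'I_n -> U) : f (\sum_i g i) = \sum_i f (g i).
Proof. exact: (big_morph _ linD lin0). Qed.
End L1.

Section L2.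
Variables (U : lmodType F) (f : U -> F) (hf : flin f).
Lemma flinD u v : f (u + v) = f u + f v.
Proof. by have := hf 1 u v; rewrite scale1r mul1r. Qed.
Lemma flin0 : f 0 = 0.
Proof. have h := flinD 0 0; rewrite addr0 -[in LHS](addr0 (f 0)) in h; exact: esym (addrI _ h). Qed.
Lemma flinZ a u : f (a *: u) = a * f u.
Proof. by have := hf a u 0; rewrite !addr0 flin0 addr0. Qed.
Lemma flinN u : f (- u) = - f u.
Proof. by rewrite -scaleN1r flinZ mulN1r. Qed.
Lemma flinB u v : f (u - v) = f u - f v.
Proof. by rewrite flinD flinN. Qed.
Lemma flin_sum n (g : 'I_n -> U) : f (\sum_i g i) = \sum_i f (g i).
Proof. exact: (big_morph _ flinD flin0). Qed.
End L2.

Lemma dual_iso (V : vectType F) (m p : nat) (x : 'I_m -> V) (f : 'I_m -> V -> F) :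
  (forall i, flin (f i)) -> (forall i j, f i (x j) = (i == j)%:R) ->
  (m + p)%N = \dim (fullv : {vspace V}) ->
  exists (Phi : V -> 'rV[F]_m * 'rV[F]_p),
    lin Phi /\ bijective Phi /\ (forall v i, (Phi v).1 ord0 i = f i v) /\
    (forall j, Phi (x j) = (delta_mx ord0 j, 0)).
Proof.
move=> fl fx hdim.
pose P v := v - \sum_j f j v *: x j.
have fsumx i (a : 'I_m -> F) : f i (\sum_j a j *: x j) = a i.
  rewrite flin_sum // (bigD1 i) //= big1 => [|j ji].
    by rewrite flinZ // fx eqxx mulr1 addr0.
  by rewrite flinZ // fx eq_sym (negPf ji) mulr0.
have fP i v : f i (P v) = 0 by rewrite /P flinB // fsumx subrr.
have Plin : lin P.
  move=> a u v; rewrite /P.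
  have -> : \sum_j f j (a *: u + v) *: x j = a *: (\sum_j f j u *: x j) + \sum_j f j v *: x j.
    rewrite scaler_sumr -big_split /=; apply: eq_bigr => j _.
    by rewrite fl scalerDl scalerA.
  rewrite scalerBr; set s1 := \sum_j _; set s2 := \sum_j _.
  by rewrite opprD !addrA; congr (_ + _); rewrite -!addrA; congr (_ + _); rewrite addrC.
set E := vbasis (fullv : {vspace V}).
set K := <<map_tuple P E>>%VS.
have PK v : P v \in K.
  rewrite (coord_vbasis (memvf v)) (lin_sum Plin).
  apply: rpred_sum => i _; rewrite (linZ Plin); apply: rpredZ.
  apply: memv_span; apply: map_f; apply: mem_nth; by rewrite size_tuple.
have Kf i w : w \in K -> f i w = 0.
  move=> /coord_span ->; rewrite flin_sum //; apply: big1 => j _.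
  by rewrite flinZ // (nth_map 0) ?size_tuple // fP mulr0.
have KP w : w \in K -> P w = w.
  move=> wK; rewrite /P big1 ?subr0 // => j _; by rewrite Kf // scale0r.
set xt := [tuple x j | j < m].
have xtE (j : 'I_m) : xt`_j = x j by rewrite -tnth_nth tnth_mktuple.
have freext : free xt.
  apply/freeP => k hk i; have := congr1 (f i) hk.
  under eq_bigr do rewrite xtE.
  by rewrite fsumx flin0.
have dimxt : \dim <<xt>> = m by rewrite (eqnP freext) size_tuple.
have sumf : (<<xt>> + K)%VS = fullv.
  apply/eqP; rewrite eqEsubv subvf /=; apply/subvP => v _.
  have -> : v = \sum_j f j v *: x j + P v by rewrite /P addrC subrK.
  apply: memv_add; last exact: PK.
  apply: rpred_sum => j _; apply: rpredZ; rewrite -xtE; apply: memv_span; apply: mem_nth; by rewrite size_tuple.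
have capf : (<<xt>> :&: K)%VS = 0%VS.
  apply/eqP; rewrite -subv0; apply/subvP => w /memv_capP [wx wK]; rewrite memv0.
  rewrite (coord_span wx); apply/eqP; apply: big1 => j _.
  have := Kf j w wK; rewrite {1}(coord_span wx).
  under eq_bigr do rewrite xtE.
  by rewrite fsumx => ->; rewrite scale0r.
have dimK : \dim K = p.
  have := dimv_sum_cap <<xt>> K; rewrite sumf capf dimv0 addn0 dimxt -hdim.
  by move/eqP; rewrite eqn_add2l => /eqP.
have [b bK] : exists b : p.-tuple V, basis_of K b.
  rewrite -dimK; exists (vbasis K); exact: vbasisP.
have bmem (j : 'I_p) : b`_j \in K by apply: (basis_mem bK); apply: mem_nth; by rewrite size_tuple.
pose Phi v := (\row_(i < m) f i v, \row_(j < p) coord b j (P v)).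
pose Psi (ac : 'rV[F]_m * 'rV[F]_p) :=
  \sum_j ac.1 ord0 j *: x j + \sum_(j < p) ac.2 ord0 j *: b`_j.
exists Phi; split; [|split; [|split]].
- move=> a u v; rewrite /Phi; congr (_, _); apply/rowP => i; rewrite !mxE.
    by rewrite fl.
  by rewrite Plin linearP.
- exists Psi.
    move=> v; rewrite /Psi /Phi /=.
    under eq_bigr do rewrite mxE.
    under [X in _ + X]eq_bigr do rewrite mxE.
    rewrite -(coord_basis bK (PK v)) /P addrC subrK //.
  case=> a c; rewrite /Psi /Phi /=.
  have sK : \sum_(j < p) c ord0 j *: b`_j \in K.
    by apply: rpred_sum => j _; apply: rpredZ.
  congr (_, _); apply/rowP => i; rewrite !mxE.
    by rewrite flinD // fsumx Kf // addr0.
  rewrite /P.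
  have -> : \sum_j f j (\sum_j0 a ord0 j0 *: x j0 + \sum_(j0 < p) c ord0 j0 *: b`_j0) *: x j
     = \sum_j a ord0 j *: x j.
    by apply: eq_bigr => j _; rewrite flinD // fsumx Kf // addr0.
  rewrite addrC addKr coord_sum_free //; exact: basis_free bK.
- by move=> v i; rewrite /Phi mxE.
- move=> j; rewrite /Phi; congr (_, _).
    by apply/rowP => i; rewrite !mxE fx eqxx.
  have -> : P (x j) = 0.
    rewrite /P (bigD1 j) //= fx eqxx scale1r big1 ?addr0 ?subrr // => i ij.
    by rewrite fx (negPf ij) scale0r.
  by apply/rowP => i; rewrite !mxE linear0.
Qed.
End Lin.

Section Super.
Variable F : fieldType.

Lemma char2 : ~~ (2%N \in [pchar F]) -> (2%:R : F) != 0.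
Proof. by move=> h; apply/negP => e; move: h; rewrite inE /= e. Qed.
Lemma char3 : ~~ (3%N \in [pchar F]) -> (3%:R : F) != 0.
Proof. by move=> h; apply/negP => e; move: h; rewrite inE /= e. Qed.

Section Ax.
Variables (W0 W1 : lmodType F) (H : liesuper W0 W1) (HH : is_liesuper H).

Lemma l00r x : lin (br00 H x). Proof. by case: HH. Qed.
Lemma l00l x : lin (fun x' => br00 H x' x). Proof. by case: HH => _ []. Qed.
Lemma l01r x : lin (br01 H x). Proof. by case: HH => _ [] _ []. Qed.
Lemma l01l y : lin (fun x => br01 H x y). Proof. by case: HH => _ [] _ [] _ []. Qed.
Lemma l11r y : lin (br11 H y). Proof. by case: HH => _ [] _ [] _ [] _ []. Qed.
Lemma l11l y : lin (fun y' => br11 H y' y). Proof. by case: HH => _ [] _ [] _ [] _ [] _ []. Qed.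
Lemma sk00 x x' : br00 H x x' = - br00 H x' x.
Proof. by case: HH => _ [] _ [] _ [] _ [] _ [] _ [] ->. Qed.
Lemma sy11 y y' : br11 H y y' = br11 H y' y.
Proof. by case: HH => _ [] _ [] _ [] _ [] _ [] _ [] _ [] ->. Qed.
Lemma jac000 x y z :
  br00 H x (br00 H y z) = br00 H (br00 H x y) z + br00 H y (br00 H x z).
Proof. by case: HH => _ [] _ [] _ [] _ [] _ [] _ [] _ [] _ [] ->. Qed.
Lemma jac001 x y z :
  br01 H x (br01 H y z) = br01 H (br00 H x y) z + br01 H y (br01 H x z).
Proof. by case: HH => _ [] _ [] _ [] _ [] _ [] _ [] _ [] _ [] _ [] ->. Qed.
Lemma jac011 x y z :
  br00 H x (br11 H y z) = br11 H (br01 H x y) z + br11 H y (br01 H x z).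
Proof. by case: HH => _ [] _ [] _ [] _ [] _ [] _ [] _ [] _ [] _ [] _ [] ->. Qed.
Lemma jac111 y z w :
  br01 H (br11 H y z) w + br01 H (br11 H z w) y + br01 H (br11 H w y) z = 0.
Proof. by case: HH => _ [] _ [] _ [] _ [] _ [] _ [] _ [] _ [] _ [] _ [] _ ->. Qed.

Lemma b00Zl a x y : br00 H (a *: x) y = a *: br00 H x y.
Proof. exact: (linZ (l00l y)). Qed.
Lemma b00Zr a x y : br00 H x (a *: y) = a *: br00 H x y.
Proof. exact: (linZ (l00r x)). Qed.
Lemma b01Zl a x y : br01 H (a *: x) y = a *: br01 H x y.
Proof. exact: (linZ (l01l y)). Qed.
Lemma b01Zr a x y : br01 H x (a *: y) = a *: br01 H x y.
Proof. exact: (linZ (l01r x)). Qed.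
Lemma b11Zl a x y : br11 H (a *: x) y = a *: br11 H x y.
Proof. exact: (linZ (l11l y)). Qed.
Lemma b11Zr a x y : br11 H x (a *: y) = a *: br11 H x y.
Proof. exact: (linZ (l11r x)). Qed.
Lemma b00Bl x x' y : br00 H (x - x') y = br00 H x y - br00 H x' y.
Proof. exact: (linB (l00l y)). Qed.
Lemma b00Br x x' y : br00 H y (x - x') = br00 H y x - br00 H y x'.
Proof. exact: (linB (l00r y)). Qed.
Lemma b01Bl x x' y : br01 H (x - x') y = br01 H x y - br01 H x' y.
Proof. exact: (linB (l01l y)). Qed.
Lemma b01Br x x' y : br01 H y (x - x') = br01 H y x - br01 H y x'.
Proof. exact: (linB (l01r y)). Qed.
Lemma b11Bl x x' y : br11 H (x - x') y = br11 H x y - br11 H x' y.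
Proof. exact: (linB (l11l y)). Qed.
Lemma b11Br x x' y : br11 H y (x - x') = br11 H y x - br11 H y x'.
Proof. exact: (linB (l11r y)). Qed.
Lemma b00Dl x x' y : br00 H (x + x') y = br00 H x y + br00 H x' y.
Proof. exact: (linD (l00l y)). Qed.
Lemma b00Dr x x' y : br00 H y (x + x') = br00 H y x + br00 H y x'.
Proof. exact: (linD (l00r y)). Qed.
Lemma b01Dl x x' y : br01 H (x + x') y = br01 H x y + br01 H x' y.
Proof. exact: (linD (l01l y)). Qed.
Lemma b01Dr x x' y : br01 H y (x + x') = br01 H y x + br01 H y x'.
Proof. exact: (linD (l01r y)). Qed.
Lemma b11Dl x x' y : br11 H (x + x') y = br11 H x y + br11 H x' y.
Proof. exact: (linD (l11l y)). Qed.
Lemma b11Dr x x' y : br11 H y (x + x') = br11 H y x + br11 H y x'.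
Proof. exact: (linD (l11r y)). Qed.
Lemma b000l y : br00 H 0 y = 0. Proof. exact: (lin0 (l00l y)). Qed.
Lemma b000r y : br00 H y 0 = 0. Proof. exact: (lin0 (l00r y)). Qed.
Lemma b010l y : br01 H 0 y = 0. Proof. exact: (lin0 (l01l y)). Qed.
Lemma b010r y : br01 H y 0 = 0. Proof. exact: (lin0 (l01r y)). Qed.
Lemma b110l y : br11 H 0 y = 0. Proof. exact: (lin0 (l11l y)). Qed.
Lemma b110r y : br11 H y 0 = 0. Proof. exact: (lin0 (l11r y)). Qed.

Lemma brpZl a e q : brp H (a *: e) q = a *: brp H e q.
Proof.
by case: e q => [e1 e2] [q1 q2]; rewrite /brp /= b00Zl b11Zl b01Zl b01Zr -scalerDr -scalerBr.
Qed.
End Ax.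

Lemma nilp_eig (V0 V1 : lmodType F) (L : liesuper V0 V1) (HL : is_liesuper L)
  e q (lam : F) : nilpotent L -> e != 0 -> brp L e q = lam *: e -> lam = 0.
Proof.
move=> [n hn] e0 he.
have ind k mu : foldl (brp L) (mu *: e) (nseq k q) = (mu * lam ^+ k) *: e.
  elim: k mu => [|k IH] mu /=; first by rewrite expr0 mulr1.
  by rewrite brpZl // he scalerA IH exprS mulrA.
have := hn e (nseq n q) (size_nseq _ _).
rewrite -[e in foldl _ e]scale1r ind mul1r => /eqP.
rewrite -[(0,0)]/(0 : V0 * V1) scaler_eq0 (negPf e0) orbF expf_eq0.
by case/andP => _ /eqP.
Qed.
End Super.

Section Cap.
Variable F : fieldType.
Variables (V0 V1 : lmodType F) (L : liesuper V0 V1).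
Variables (W0 W1 : lmodType F) (H : liesuper W0 W1) (HH : is_liesuper H).
Variables (g0 : W0 -> V0) (g1 : W1 -> V1).
Hypotheses (hg : is_hom H L g0 g1) (s0 : forall v, exists w, g0 w = v)
  (s1 : forall v, exists w, g1 w = v)
  (k0 : forall w, g0 w = 0 <-> in_center0 H w)
  (k1 : forall w, g1 w = 0 <-> in_center1 H w).

Lemma g0lin : lin g0. Proof. by case: hg. Qed.
Lemma g1lin : lin g1. Proof. by case: hg => _ []. Qed.
Lemma g00 x x' : g0 (br00 H x x') = br00 L (g0 x) (g0 x'). Proof. by case: hg => _ [] _ [] ->. Qed.
Lemma g01 x y : g1 (br01 H x y) = br01 L (g0 x) (g1 y). Proof. by case: hg => _ [] _ [] _ [] ->. Qed.
Lemma g11 y y' : g0 (br11 H y y') = br11 L (g1 y) (g1 y'). Proof. by case: hg => _ [] _ [] _ [] _ ->. Qed.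

Lemma cen0 w w' : g0 w = g0 w' -> in_center0 H (w - w').
Proof. by move=> e; apply/k0; rewrite (linB g0lin) e subrr. Qed.
Lemma cen1 w w' : g1 w = g1 w' -> in_center1 H (w - w').
Proof. by move=> e; apply/k1; rewrite (linB g1lin) e subrr. Qed.

Lemma c00l w w' h : g0 w = g0 w' -> br00 H w h = br00 H w' h.
Proof. by move/cen0 => [c _]; apply/eqP; rewrite -subr_eq0 -b00Bl // c. Qed.
Lemma c00r w w' h : g0 w = g0 w' -> br00 H h w = br00 H h w'.
Proof. by move=> e; rewrite (sk00 HH) (c00l _ e) -(sk00 HH). Qed.
Lemma c01l w w' h : g0 w = g0 w' -> br01 H w h = br01 H w' h.
Proof. by move/cen0 => [_ c]; apply/eqP; rewrite -subr_eq0 -b01Bl // c. Qed.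
Lemma c01r w w' h : g1 w = g1 w' -> br01 H h w = br01 H h w'.
Proof. by move/cen1 => [c _]; apply/eqP; rewrite -subr_eq0 -b01Br // c. Qed.
Lemma c11l w w' h : g1 w = g1 w' -> br11 H w h = br11 H w' h.
Proof. by move/cen1 => [_ c]; apply/eqP; rewrite -subr_eq0 -b11Bl // c. Qed.
Lemma c11r w w' h : g1 w = g1 w' -> br11 H h w = br11 H h w'.
Proof. by move=> e; rewrite (sy11 HH) (c11l _ e) -(sy11 HH). Qed.

Lemma even_beta (z : V0) (beta : V1 -> V1 -> F) :
  (3%:R : F) != 0 -> z != 0 -> (forall u y, br01 L u y = 0) ->
  (forall y y', br11 L y y' = beta y y' *: z) -> forall y, beta y y = 0.
Proof.
move=> h3 z0 b01 b11 y; case: (eqVneq (beta y y) 0) => // a0; exfalso.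
have [zt hz] := s0 z; have [yt hy] := s1 y.
set a := beta y y in a0.
have E1 : g0 (br11 H yt yt) = g0 (a *: zt) by rewrite g11 hy b11 (linZ g0lin) hz.
have cen : in_center0 H zt.
  split.
    move=> h; have : a *: br00 H zt h = 0.
      rewrite -b00Zl // -(c00l _ E1) (sk00 HH) (jac011 HH).
      have e0 : g1 (br01 H h yt) = g1 0 by rewrite g01 b01 (lin0 g1lin).
      by rewrite (c11l _ e0) (c11r _ e0) b110l // b110r // addr0 oppr0.
    by move/eqP; rewrite scaler_eq0 (negPf a0) /= => /eqP.
  set s := br01 H zt yt.
  have key h : a *: br01 H zt h = - ((2%:R * beta y (g1 h)) *: s).
    rewrite -b01Zl // -(c01l _ E1).
    have J := jac111 HH yt yt h.
    have E2 : g0 (br11 H yt h) = g0 (beta y (g1 h) *: zt).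
      by rewrite g11 hy b11 (linZ g0lin) hz.
    rewrite (sy11 HH h yt) (c01l _ E2) b01Zl // in J.
    move/eqP: J; rewrite -addrA addr_eq0 => /eqP ->.
    by rewrite -scalerDl mulr_natl mulr2n.
  have s0' : s = 0.
    have := key yt; rewrite hy -/a -/s => /eqP.
    rewrite -subr_eq0 opprK -scalerDl.
    rewrite scaler_eq0 => /orP [|/eqP //].
    have -> : a + 2%:R * a = 3%:R * a.
      by ring.
    by rewrite mulf_eq0 (negPf h3) (negPf a0).
  move=> h; have := key h; rewrite s0' scaler0 oppr0 => /eqP.
  by rewrite scaler_eq0 (negPf a0) /= => /eqP.
by move/eqP: z0; apply; rewrite -hz; apply/k0.
Qed.
End Cap.

Lemma lmod_comb (F : fieldType) (M : lmodType F) (u v : M) p1 p2 p3 p4 :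
  p1 *: u - p2 *: v - (p3 *: u - p4 *: v) = (p1 - p3) *: u + (p4 - p2) *: v.
Proof.
rewrite !scalerBl opprB addrACA [RHS]addrACA; congr (_ + _).
by rewrite addrC.
Qed.

Section Cap2.
Variable F : fieldType.
Variables (V0 V1 : lmodType F) (L : liesuper V0 V1).
Variables (W0 W1 : lmodType F) (H : liesuper W0 W1) (HH : is_liesuper H).
Variables (g0 : W0 -> V0) (g1 : W1 -> V1).
Hypotheses (hg : is_hom H L g0 g1) (s0 : forall v, exists w, g0 w = v)
  (s1 : forall v, exists w, g1 w = v)
  (k0 : forall w, g0 w = 0 <-> in_center0 H w)
  (k1 : forall w, g1 w = 0 <-> in_center1 H w).

Variables (z : V0) (om : V0 -> V0 -> F) (zt : W0).
Hypotheses (hz : g0 zt = z) (b01 : forall u y, br01 L u y = 0)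
  (b11 : forall y y', br11 L y y' = 0)
  (b00 : forall u v, br00 L u v = om u v *: z) (sk : forall u v, om u v = - om v u).

Let t h := br00 H h zt.

Lemma pl_E X Y h : om (g0 X) (g0 Y) *: t h =
  om (g0 h) (g0 Y) *: t X - om (g0 h) (g0 X) *: t Y.
Proof.
have J := jac000 HH h X Y.
have e1 : g0 (br00 H X Y) = g0 (om (g0 X) (g0 Y) *: zt)
  by rewrite (g00 hg) b00 (linZ (g0lin hg)) hz.
have e2 : g0 (br00 H h X) = g0 (om (g0 h) (g0 X) *: zt)
  by rewrite (g00 hg) b00 (linZ (g0lin hg)) hz.
have e3 : g0 (br00 H h Y) = g0 (om (g0 h) (g0 Y) *: zt)
  by rewrite (g00 hg) b00 (linZ (g0lin hg)) hz.
rewrite (c00r HH hg k0 _ e1) (c00l HH hg k0 _ e2) (c00r HH hg k0 _ e3) in J.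
rewrite b00Zr // b00Zl // b00Zr // (sk00 HH zt Y) in J.
rewrite /t J scalerN addrC.
by [].
Qed.

Lemma pl_O X Y w : om (g0 X) (g0 Y) *: br01 H zt w = 0.
Proof.
have J := jac001 HH X Y w.
have e0 : g1 (br01 H Y w) = g1 0 by rewrite (g01 hg) b01 (lin0 (g1lin hg)).
have e0' : g1 (br01 H X w) = g1 0 by rewrite (g01 hg) b01 (lin0 (g1lin hg)).
have e1 : g0 (br00 H X Y) = g0 (om (g0 X) (g0 Y) *: zt)
  by rewrite (g00 hg) b00 (linZ (g0lin hg)) hz.
rewrite (c01r HH hg k1 _ e0) (c01r HH hg k1 _ e0') !b010r // addr0 in J.
by rewrite -b01Zl // -(c01l HH hg k0 _ e1) J.
Qed.

Definition Pl a b c d := om a b * om c d - om a c * om b d + om a d * om b c.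

Lemma pl_T ta tb tc td : Pl (g0 ta) (g0 tb) (g0 tc) (g0 td) != 0 -> t ta = 0.
Proof.
set a := g0 ta; set b := g0 tb; set c := g0 tc; set d := g0 td => P0.
have e1 := pl_E ta tb tc; have e2 := pl_E ta tb td; have e3 := pl_E tc td ta.
rewrite -/a -/b -/c -/d in e1 e2 e3.
have X : (om a b * om c d) *: t ta =
   (om a d * om c b - om a c * om d b) *: t ta + (om a c * om d a - om a d * om c a) *: t tb.
  rewrite -scalerA e3 scalerBr !scalerA [om a b * om a d]mulrC [om a b * om a c]mulrC.
  rewrite -!scalerA e1 e2 !scalerBr !scalerA.
  exact: lmod_comb.
have hb : om a c * om d a - om a d * om c a = 0.
  by rewrite (sk d a) (sk c a); ring.
rewrite hb scale0r addr0 in X.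
apply/eqP; move: P0; apply: contraNT => nt.
have : (Pl a b c d) *: t ta = 0.
  have -> : Pl a b c d = om a b * om c d - (om a d * om c b - om a c * om d b).
    by rewrite /Pl (sk c b) (sk d b); ring.
  by rewrite scalerBl X subrr.
by move/eqP; rewrite scaler_eq0 (negPf nt) orbF.
Qed.

Lemma pl_main : z != 0 -> forall a b c d, Pl a b c d = 0.
Proof.
move=> z0 a b c d; apply/eqP; apply: contraT => P0.
have [ta ha] := s0 a; have [tb hb] := s0 b; have [tc hc] := s0 c; have [td hd] := s0 d.
have tA : t ta = 0 by apply: (@pl_T ta tb tc td); rewrite ha hb hc hd.
have tB : t tb = 0.
  apply: (@pl_T tb ta td tc); rewrite ha hb hc hd.
  suff -> : Pl b a d c = Pl a b c d by [].
  by rewrite /Pl (sk b a) (sk d c); ring.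
have tC : t tc = 0.
  apply: (@pl_T tc td ta tb); rewrite ha hb hc hd.
  suff -> : Pl c d a b = Pl a b c d by [].
  by rewrite /Pl (sk c a) (sk d b) (sk c b) (sk d a); ring.
have tD : t td = 0.
  apply: (@pl_T td tc tb ta); rewrite ha hb hc hd.
  suff -> : Pl d c b a = Pl a b c d by [].
  by rewrite /Pl (sk d c) (sk b a) (sk d b) (sk c a) (sk d a) (sk c b); ring.
have [X [hX tX]] : exists X, om a (g0 X) != 0 /\ t X = 0.
  case: (eqVneq (om a b) 0) => [ab|]; last by exists tb; rewrite hb.
  case: (eqVneq (om a c) 0) => [ac|]; last by exists tc; rewrite hc.
  case: (eqVneq (om a d) 0) => [ad|]; last by exists td; rewrite hd.
  by move: P0; rewrite /Pl ab ac ad !mul0r subrr add0r eqxx.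
have th h : t h = 0.
  have := pl_E ta X h; rewrite tA tX !scaler0 subrr ha => /eqP.
  by rewrite scaler_eq0 (negPf hX) /= => /eqP.
have cz : in_center0 H zt.
  split => [h|w]; first by rewrite (sk00 HH) -/(t h) th oppr0.
  have := pl_O ta X w; rewrite ha; move/eqP.
  by rewrite scaler_eq0 (negPf hX) /= => /eqP.
by move: z0; rewrite -hz (proj2 (k0 zt) cz) eqxx.
Qed.
End Cap2.

Section Cap3.
Variable F : fieldType.
Variables (V0 V1 : lmodType F) (L : liesuper V0 V1).
Variables (W0 W1 : lmodType F) (H : liesuper W0 W1) (HH : is_liesuper H).
Variables (g0 : W0 -> V0) (g1 : W1 -> V1).
Hypotheses (hg : is_hom H L g0 g1) (s0 : forall v, exists w, g0 w = v)
  (s1 : forall v, exists w, g1 w = v)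
  (k0 : forall w, g0 w = 0 <-> in_center0 H w)
  (k1 : forall w, g1 w = 0 <-> in_center1 H w).

Variables (z : V1) (B : V0 -> V1 -> F) (zt : W1).
Hypotheses (hz : g1 zt = z) (b00 : forall u v, br00 L u v = 0)
  (b11 : forall y y', br11 L y y' = 0)
  (b01 : forall u y, br01 L u y = B u y *: z).

Let t h := br11 H zt h.
Let u h := br01 H h zt.

Lemma od_O1 X Y h : B (g0 X) (g1 Y) *: t h + B (g0 X) (g1 h) *: t Y = 0.
Proof.
have J := jac011 HH X Y h.
have e0 : g0 (br11 H Y h) = g0 0 by rewrite (g11 hg) b11 (lin0 (g0lin hg)).
have e1 : g1 (br01 H X Y) = g1 (B (g0 X) (g1 Y) *: zt)
  by rewrite (g01 hg) b01 (linZ (g1lin hg)) hz.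
have e2 : g1 (br01 H X h) = g1 (B (g0 X) (g1 h) *: zt)
  by rewrite (g01 hg) b01 (linZ (g1lin hg)) hz.
rewrite (c00r HH hg k0 _ e0) b000r // (c11l HH hg k1 _ e1) (c11r HH hg k1 _ e2) in J.
by rewrite b11Zl // b11Zr // (sy11 HH Y zt) in J; rewrite /t J.
Qed.

Lemma od_O2 h0 X Y : B (g0 X) (g1 Y) *: u h0 = B (g0 h0) (g1 Y) *: u X.
Proof.
have J := jac001 HH h0 X Y.
have e0 : g0 (br00 H h0 X) = g0 0 by rewrite (g00 hg) b00 (lin0 (g0lin hg)).
have e1 : g1 (br01 H X Y) = g1 (B (g0 X) (g1 Y) *: zt)
  by rewrite (g01 hg) b01 (linZ (g1lin hg)) hz.
have e2 : g1 (br01 H h0 Y) = g1 (B (g0 h0) (g1 Y) *: zt)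
  by rewrite (g01 hg) b01 (linZ (g1lin hg)) hz.
rewrite (c01l HH hg k0 _ e0) b010l // add0r (c01r HH hg k1 _ e1) (c01r HH hg k1 _ e2) in J.
by rewrite !b01Zr // in J.
Qed.

Lemma od_main : (2%:R : F) != 0 -> z != 0 ->
  forall x x' y y', B x y * B x' y' = B x y' * B x' y.
Proof.
move=> h2 z0 x x' y y'; apply/eqP; rewrite -subr_eq0; apply: contraT => D0.
have [xt hx] := s0 x; have [xt' hx'] := s0 x'; have [yt hy] := s1 y; have [yt' hy'] := s1 y'.
set D := _ - _ in D0.
have u1 : u xt' = 0.
  have e1 := od_O2 xt' xt yt; have e2 := od_O2 xt' xt yt'.
  rewrite hx hx' hy hy' in e1 e2.
  have : D *: u xt' = 0.
    rewrite /D scalerBl (mulrC (B x y)) (mulrC (B x y')) -!scalerA e1 e2 !scalerA.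
    by rewrite mulrC subrr.
  by move/eqP; rewrite scaler_eq0 (negPf D0) /= => /eqP.
have u0 : u xt = 0.
  have e1 := od_O2 xt' xt yt; have e2 := od_O2 xt' xt yt'.
  rewrite hx hx' hy hy' in e1 e2.
  have : D *: u xt = 0.
    rewrite /D scalerBl -!scalerA -e2 -e1 !scalerA.
    by rewrite mulrC subrr.
  by move/eqP; rewrite scaler_eq0 (negPf D0) /= => /eqP.
have [X [Y [hXY uX]]] : exists X Y, B (g0 X) (g1 Y) != 0 /\ u X = 0.
  case: (eqVneq (B x y) 0) => [ab|]; last by exists xt, yt; rewrite hx hy.
  case: (eqVneq (B x y') 0) => [ac|]; last by exists xt, yt'; rewrite hx hy'.
  case: (eqVneq (B x' y) 0) => [ad|]; last by exists xt', yt; rewrite hx' hy.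
  by move: D0; rewrite /D ab ac !mul0r subrr eqxx.
have tY : t Y = 0.
  have := od_O1 X Y Y; rewrite -scalerDl => /eqP; rewrite scaler_eq0 => /orP [|/eqP //].
  by rewrite -mulr2n -mulr_natl mulf_eq0 (negPf h2) (negPf hXY).
have cz : in_center1 H zt.
  split => [h|h].
    have := od_O2 h X Y; rewrite uX scaler0 => /eqP.
    by rewrite scaler_eq0 (negPf hXY) /= => /eqP.
  have := od_O1 X Y h; rewrite tY scaler0 addr0 => /eqP.
  by rewrite scaler_eq0 (negPf hXY) /= => /eqP.
by move: z0; rewrite -hz (proj2 (k1 zt) cz) eqxx.
Qed.
End Cap3.

Section Gen.
Variable F : fieldType.

Lemma cap_iso (V0 V1 U0 U1 : lmodType F) (L : liesuper V0 V1) (M : liesuper U0 U1) :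
  isomorphic L M -> capable M -> capable L.
Proof.
move=> [f0 [f1 [[l0 [l1 [h00 [h01 h11]]]] [[f0' c0 c0'] [f1' c1 c1']]]]].
move=> [W0 [W1 [H [HH [g0 [g1 [[m0 [m1 [i00 [i01 i11]]]] [s0 [s1 [k0 k1]]]]]]]]]].
have inj0 := can_inj c0; have inj1 := can_inj c1.
have l0' : lin f0'.
  by move=> a u v; apply: inj0; rewrite l0 !c0'.
have l1' : lin f1'.
  by move=> a u v; apply: inj1; rewrite l1 !c1'.
exists W0, W1, H; split=> //.
exists (fun w => f0' (g0 w)), (fun w => f1' (g1 w)); split; [|split; [|split; [|split]]].
- split; first by move=> a u v; rewrite m0 l0'.
  split; first by move=> a u v; rewrite m1 l1'.
  split; first by move=> x x'; apply: inj0; rewrite h00 !c0' i00.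
  split; first by move=> x y; apply: inj1; rewrite h01 !c0' !c1' i01.
  by move=> y y'; apply: inj0; rewrite h11 !c1' c0' i11.
- by move=> v; have [w hw] := s0 (f0 v); exists w; rewrite hw c0.
- by move=> v; have [w hw] := s1 (f1 v); exists w; rewrite hw c1.
- move=> w; rewrite -k0; split => [e|->]; last exact: lin0 l0'.
  by rewrite -[g0 w]c0' e (lin0 l0).
- move=> w; rewrite -k1; split => [e|->]; last exact: lin0 l1'.
  by rewrite -[g1 w]c1' e (lin0 l1).
Qed.

Section Cover.
Variables (U0 U1 C0 C1 : lmodType F) (M : liesuper U0 U1) (HM : is_liesuper M).
Variables (p00 : U0 -> U0 -> C0) (p01 : U0 -> U1 -> C1) (p11 : U1 -> U1 -> C0).
Hypotheses (q1 : forall x, lin (p00 x)) (q2 : forall x, lin (fun x' => p00 x' x))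
  (q3 : forall x, lin (p01 x)) (q4 : forall y, lin (fun x => p01 x y))
  (q5 : forall y, lin (p11 y)) (q6 : forall y, lin (fun y' => p11 y' y))
  (qs : forall x x', p00 x x' = - p00 x' x) (qy : forall y y', p11 y y' = p11 y' y)
  (J1 : forall x y z, p00 x (br00 M y z) = p00 (br00 M x y) z + p00 y (br00 M x z))
  (J2 : forall x y z, p01 x (br01 M y z) = p01 (br00 M x y) z + p01 y (br01 M x z))
  (J3 : forall x y z, p00 x (br11 M y z) = p11 (br01 M x y) z + p11 y (br01 M x z))
  (J4 : forall y z w, p01 (br11 M y z) w + p01 (br11 M z w) y + p01 (br11 M w y) z = 0)
  (N0 : forall x, (forall x', br00 M x x' = 0 /\ p00 x x' = 0) ->
                  (forall y, br01 M x y = 0 /\ p01 x y = 0) -> x = 0)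
  (N1 : forall w, (forall x, br01 M x w = 0 /\ p01 x w = 0) ->
                  (forall y, br11 M w y = 0 /\ p11 w y = 0) -> w = 0).

Definition covH : liesuper (U0 * C0)%type (U1 * C1)%type :=
  LieSuper (fun a b => (br00 M a.1 b.1, p00 a.1 b.1))
           (fun a b => (br01 M a.1 b.1, p01 a.1 b.1))
           (fun a b => (br11 M a.1 b.1, p11 a.1 b.1)).

Lemma cover_cap : capable M.
Proof.
have HM' := HM.
case: HM' => l1 [l2 [l3 [l4 [l5 [l6 [s1 [s2 [j1 [j2 [j3 j4]]]]]]]]]].
exists (U0 * C0)%type, (U1 * C1)%type, covH; split.
  split; first by move=> x a u v; rewrite /= l1 q1.
  split; first by move=> x a u v; rewrite /= l2 q2.
  split; first by move=> x a u v; rewrite /= l3 q3.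
  split; first by move=> x a u v; rewrite /= l4 q4.
  split; first by move=> x a u v; rewrite /= l5 q5.
  split; first by move=> x a u v; rewrite /= l6 q6.
  split; first by move=> x x'; rewrite /= s1 qs.
  split; first by move=> x x'; rewrite /= s2 qy.
  split; first by move=> x y z; rewrite /= j1 J1.
  split; first by move=> x y z; rewrite /= j2 J2.
  split; first by move=> x y z; rewrite /= j3 J3.
  by move=> x y z; apply: injective_projections => /=; [exact: j4 | exact: J4].
exists fst, fst; split; [|split; [|split; [|split]]].
- by do 3?split.
- by move=> v; exists (v, 0).
- by move=> v; exists (v, 0).
- case=> x c /=; split.
    move->; split => [[x' c']|[y d]] /=.
      by rewrite (lin0 (l2 _)) (lin0 (q2 _)).
    by rewrite (lin0 (l4 _)) (lin0 (q4 _)).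
  move=> [h1 h2]; apply: N0.
    by move=> x'; have := h1 (x', 0); case.
  by move=> y; have := h2 (y, 0); case.
- case=> w d /=; split.
    move->; split => [[x' c']|[y e]] /=.
      by rewrite (lin0 (l3 _)) (lin0 (q3 _)).
    by rewrite (lin0 (l6 _)) (lin0 (q6 _)).
  move=> [h1 h2]; apply: N1.
    by move=> x'; have := h1 (x', 0); case.
  by move=> y; have := h2 (y, 0); case.
Qed.
End Cover.
End Gen.

Section Models.
Variable F : fieldType.

Lemma dsum_lie (V0 V1 W0 W1 : lmodType F) (L : liesuper V0 V1) (M : liesuper W0 W1) :
  is_liesuper L -> is_liesuper M -> is_liesuper (dsum L M).
Proof.
case=> l1 [l2 [l3 [l4 [l5 [l6 [s1 [s2 [j1 [j2 [j3 j4]]]]]]]]]].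
case=> m1 [m2 [m3 [m4 [m5 [m6 [t1 [t2 [i1 [i2 [i3 i4]]]]]]]]]].
split; first by move=> x a u v; rewrite /= l1 m1.
split; first by move=> x a u v; rewrite /= l2 m2.
split; first by move=> x a u v; rewrite /= l3 m3.
split; first by move=> x a u v; rewrite /= l4 m4.
split; first by move=> x a u v; rewrite /= l5 m5.
split; first by move=> x a u v; rewrite /= l6 m6.
split; first by move=> x x'; rewrite /= s1 t1.
split; first by move=> x x'; rewrite /= s2 t2.
split; first by move=> x y z; rewrite /= j1 i1.
split; first by move=> x y z; rewrite /= j2 i2.
split; first by move=> x y z; rewrite /= j3 i3.
by move=> x y z; apply: injective_projections => /=; [exact: j4 | exact: i4].
Qed.

Lemma Aab_lie m n : is_liesuper (Aab F m n).
Proof.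
do 6 (split; first by move=> x a u v; rewrite /= scaler0 addr0).
do 2 (split; first by move=> *; rewrite /= ?oppr0).
do 3 (split; first by move=> *; rewrite /= addr0).
by move=> *; rewrite /= !addr0.
Qed.

Definition ex : 'I_(1 + 1 + 1) := @Hx 1 ord0.
Definition em : 'I_(1 + 1 + 1) := @Hxm 1 ord0.
Definition ez : 'I_(1 + 1 + 1) := Hz 1.
Definition om3 (u v : 'rV[F]_(1 + 1 + 1)) :=
  u ord0 ex * v ord0 em - u ord0 em * v ord0 ex.

Lemma Heis00 u v : br00 (Heis F 1 0) u v = om3 u v *: delta_mx ord0 ez.
Proof. by rewrite /= big_ord1. Qed.
Lemma Heis11 y y' : br11 (Heis F 1 0) y y' = 0.
Proof. by rewrite /= big_ord0 scale0r. Qed.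

Lemma om3_dz u c : om3 u (c *: delta_mx ord0 ez) = 0.
Proof. by rewrite /om3 !mxE /= !mulr0 subrr. Qed.
Lemma om3_dzl u c : om3 (c *: delta_mx ord0 ez) u = 0.
Proof. by rewrite /om3 !mxE /= !mulr0 !mul0r subrr. Qed.

Lemma Heis_lie : is_liesuper (Heis F 1 0).
Proof.
split.
  move=> x a u v; rewrite !Heis00 scalerA -scalerDl; congr (_ *: _).
  by rewrite /om3 !mxE; ring.
split.
  move=> x a u v; rewrite !Heis00 scalerA -scalerDl; congr (_ *: _).
  by rewrite /om3 !mxE; ring.
do 2 (split; first by move=> x a u v; rewrite /= scaler0 addr0).
do 2 (split; first by move=> x a u v; rewrite !Heis11 scaler0 addr0).
split; first by move=> x x'; rewrite !Heis00 -scaleNr; congr (_ *: _); rewrite /om3; ring.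
split; first by move=> *; rewrite !Heis11.
split; first by move=> x y z; rewrite !Heis00 !om3_dz om3_dzl !scale0r addr0.
split; first by move=> *; rewrite /= addr0.
split; first by move=> x y z; rewrite !Heis11 Heis00 /om3 !mxE !mulr0 subrr scale0r addr0.
by move=> *; rewrite /= !addr0.
Qed.

Definition ey : 'I_(1 + 1) := lshift 1 (@ord0 0).
Definition ezz : 'I_(1 + 1) := rshift 1 (@ord0 0).

Lemma Hm01 (u : 'rV[F]_1) (w : 'rV[F]_(1 + 1)) :
  br01 (Hm F 1) u w = (u ord0 ord0 * w ord0 ey) *: delta_mx ord0 ezz.
Proof. by rewrite /= big_ord1. Qed.

Lemma Hm_lie : is_liesuper (Hm F 1).
Proof.
do 2 (split; first by move=> x a u v; rewrite /= scaler0 addr0).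
split.
  move=> x a u v; rewrite !Hm01 scalerA -scalerDl; congr (_ *: _).
  by rewrite !mxE; ring.
split.
  move=> x a u v; rewrite !Hm01 scalerA -scalerDl; congr (_ *: _).
  by rewrite !mxE; ring.
do 2 (split; first by move=> x a u v; rewrite /= scaler0 addr0).
split; first by move=> *; rewrite /= oppr0.
split; first by [].
split; first by move=> *; rewrite /= addr0.
split; first by move=> x y z; rewrite !Hm01 !mxE /= !mulr0 !mul0r !scale0r addr0.
split; first by move=> *; rewrite /= addr0.
by move=> *; rewrite !Hm01 !mxE !mul0r !scale0r !addr0.
Qed.
End Models.

Section Cov1.
Variables (F : fieldType) (p q : nat).
Local Notation U0 := ('rV[F]_(1 + 1 + 1) * 'rV[F]_p)%type.
Local Notation U1 := ('rV[F]_0 * 'rV[F]_q)%type.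
Local Notation M := (dsum (Heis F 1 0) (Aab F p q)).

Definition fx1 (x : U0) := x.1 ord0 ex.
Definition P00 (x x' : U0) : U0 * 'rV[F]_q := (fx1 x' *: x - fx1 x *: x', 0).
Definition P01 (x : U0) (y : U1) : 'rV[F]_1 := 0.
Definition P11 (y y' : U1) : U0 * 'rV[F]_q := (0, \row_j (y.2 ord0 j * y'.2 ord0 j)).

Lemma dex : @delta_mx F 1 (1+1+1) ord0 ez ord0 ex = 0. Proof. by rewrite mxE. Qed.
Lemma dem : @delta_mx F 1 (1+1+1) ord0 ez ord0 em = 0. Proof. by rewrite mxE. Qed.

Ltac pt := apply: injective_projections => /=.
Ltac rt := apply/rowP => i; rewrite !mxE /=.

Lemma M00 (a b : U0) : br00 M a b = (om3 a.1 b.1 *: delta_mx ord0 ez, 0).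
Proof. by rewrite /= big_ord1. Qed.
Lemma M01 (a : U0) (b : U1) : br01 M a b = 0.
Proof. by []. Qed.
Lemma M11 (a b : U1) : br11 M a b = 0.
Proof. by apply: injective_projections; rewrite /= ?big_ord0 ?scale0r. Qed.

Ltac sv := rewrite /P00 /P01 /P11 /fx1 /om3 /=; repeat pt; rt; try ring.

Lemma cap_M1 : capable M.
Proof.
apply: (@cover_cap F _ _ _ _ M (dsum_lie (Heis_lie F) (Aab_lie F p q)) P00 P01 P11).
- by move=> x a u v; sv.
- by move=> x a u v; sv.
- by move=> x a u v; sv.
- by move=> x a u v; sv.
- by move=> x a u v; sv.
- by move=> x a u v; sv.
- by move=> x x'; sv.
- by move=> x x'; sv.
- by move=> x y z; rewrite !M00; sv.
- by move=> x y z; sv.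
- by move=> x y z; rewrite !M11 !M01; sv.
- by move=> x y z; sv.
- move=> x h1 _.
  have [_ e1] := h1 (delta_mx ord0 ex, 0).
  have [e2 _] := h1 (delta_mx ord0 em, 0).
  have hx : x.1 ord0 ex = 0.
    have := congr1 (fun r : U0 => r.1 ord0 ez) e2; rewrite M00 /om3 !mxE /=.
    by rewrite !mulr1 mulr0 subr0.
  have := congr1 fst e1; rewrite /P00 /fx1 /= hx mxE /= scale0r subr0 scale1r.
  done.
- move=> w _ h1; apply: injective_projections; first by rewrite thinmx0.
  apply/rowP => j; have [_ e] := h1 (0, delta_mx ord0 j).
  have := congr1 (fun r : U0 * 'rV[F]_q => r.2 ord0 j) e.
  by rewrite /P11 /= !mxE !eqxx mulr1.
Qed.
End Cov1.

Section Cov2.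
Variables (F : fieldType) (p q : nat).
Local Notation U0 := ('rV[F]_1 * 'rV[F]_p)%type.
Local Notation U1 := ('rV[F]_(1 + 1) * 'rV[F]_q)%type.
Local Notation M := (dsum (Hm F 1) (Aab F p q)).

Definition fx2 (x : U0) := x.1 ord0 ord0.
Definition Q00 (x x' : U0) : U0 * 'rV[F]_q := (fx2 x' *: x - fx2 x *: x', 0).
Definition Q01 (x : U0) (w : U1) : 'rV[F]_1 := \row_(i < 1) (fx2 x * w.1 ord0 ezz).
Definition Q11 (y y' : U1) : U0 * 'rV[F]_q := (0, \row_j (y.2 ord0 j * y'.2 ord0 j)).

Lemma N00 (a b : U0) : br00 M a b = 0.
Proof. by []. Qed.
Lemma N01 (a : U0) (b : U1) :
  br01 M a b = ((a.1 ord0 ord0 * b.1 ord0 ey) *: delta_mx ord0 ezz, 0).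
Proof. by rewrite /= big_ord1. Qed.
Lemma N11 (a b : U1) : br11 M a b = 0.
Proof. by []. Qed.

Ltac pt := apply: injective_projections => /=.
Ltac rt := apply/rowP => i; rewrite !mxE /=.
Ltac sv := rewrite /Q00 /Q01 /Q11 /fx2 /=; repeat pt; rt; try ring.

Lemma cap_M2 : capable M.
Proof.
apply: (@cover_cap F _ _ _ _ M (dsum_lie (Hm_lie F) (Aab_lie F p q)) Q00 Q01 Q11).
- by move=> x a u v; sv.
- by move=> x a u v; sv.
- by move=> x a u v; sv.
- by move=> x a u v; sv.
- by move=> x a u v; sv.
- by move=> x a u v; sv.
- by move=> x x'; sv.
- by move=> x x'; sv.
- by move=> x y z; rewrite !N00; sv.
- by move=> x y z; rewrite !N01 !N00; sv.
- by move=> x y z; rewrite !N11 !N01; sv.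
- by move=> x y z; rewrite !N11; sv.
- move=> x h1 h2.
  have [e2 _] := h2 (delta_mx ord0 ey, 0).
  have [_ e1] := h1 (delta_mx ord0 ord0, 0).
  have hx : x.1 ord0 ord0 = 0.
    have := congr1 (fun r : U1 => r.1 ord0 ezz) e2; rewrite N01 !mxE /=.
    by rewrite !mulr1.
  have := congr1 fst e1; rewrite /Q00 /fx2 /= hx mxE /= scale0r subr0 scale1r.
  done.
- move=> w h1 h2.
  have [e1 e2] := h1 (delta_mx ord0 ord0, 0).
  have hy : w.1 ord0 ey = 0.
    have := congr1 (fun r : U1 => r.1 ord0 ezz) e1; rewrite N01 !mxE /=.
    by rewrite !mul1r mulr1.
  have hz : w.1 ord0 ezz = 0.
    have := congr1 (fun r : 'rV[F]_1 => r ord0 ord0) e2; rewrite /Q01 /fx2 !mxE /=.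
    by rewrite mul1r.
  apply: injective_projections.
    apply/rowP => i; rewrite mxE.
    have : i = ey \/ i = ezz.
      by case: i => [[|[|k]] Hk]; [left; exact: val_inj | right; exact: val_inj | ].
    by case=> ->; rewrite ?hy ?hz ?ord1.
  apply/rowP => j; have [_ e] := h2 (0, delta_mx ord0 j).
  have := congr1 (fun r : U0 * 'rV[F]_q => r.2 ord0 j) e.
  by rewrite /Q11 /= !mxE !eqxx mulr1.
Qed.
End Cov2.

Section Str.
Variable F : fieldType.

Lemma dual_le (V : vectType F) (m : nat) (x : 'I_m -> V) (f : 'I_m -> V -> F) :
  (forall i, flin (f i)) -> (forall i j, f i (x j) = (i == j)%:R) ->
  (m <= \dim (fullv : {vspace V}))%N.
Proof.
move=> fl fx.
have fsumx i (a : 'I_m -> F) : f i (\sum_j a j *: x j) = a i.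
  rewrite flin_sum // (bigD1 i) //= big1 => [|j ji].
    by rewrite flinZ // fx eqxx mulr1 addr0.
  by rewrite flinZ // fx eq_sym (negPf ji) mulr0.
set xt := [tuple x j | j < m].
have xtE (j : 'I_m) : xt`_j = x j by rewrite -tnth_nth tnth_mktuple.
have freext : free xt.
  apply/freeP => k hk i; have := congr1 (f i) hk.
  under eq_bigr do rewrite xtE.
  by rewrite fsumx flin0.
have := dimvS (subvf <<xt>>); by rewrite (eqnP freext) size_tuple.
Qed.

Lemma extra_fun (V : vectType F) (m : nat) (x : 'I_m -> V) (f : 'I_m -> V -> F) (z : V) :
  (forall i, flin (f i)) -> (forall i j, f i (x j) = (i == j)%:R) ->
  z != 0 -> (forall i, f i z = 0) ->
  exists h : V -> F, flin h /\ h z = 1 /\ forall j, h (x j) = 0.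
Proof.
move=> fl fx z0 fz.
have le := dual_le fl fx.
have [Phi [Pl [[Psi c1 c2] [P1 Px]]]] :=
  dual_iso (p := (\dim (fullv : {vspace V}) - m)%N) fl fx (subnKC le).
have P0 : Phi 0 = 0 := lin0 Pl.
have Pz1 : (Phi z).1 = 0 by apply/rowP => i; rewrite P1 fz mxE.
have Pz2 : (Phi z).2 != 0.
  apply/negP => /eqP e; move/eqP: z0; apply.
  rewrite -(c1 z) -(c1 0) P0; congr Psi.
  by apply: injective_projections; rewrite /= ?Pz1 ?e.
have [i hi] : exists i, (Phi z).2 ord0 i != 0.
  apply/existsP; move: Pz2; apply: contraR; rewrite negb_exists => /forallP h.
  by apply/eqP/rowP => i; rewrite mxE; apply/eqP; move: (h i); rewrite negbK.
exists (fun v => (Phi v).2 ord0 i / (Phi z).2 ord0 i); split; [|split].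
- move=> a u v; rewrite Pl /= !mxE mulrDl mulrA //.
- by rewrite divff.
- by move=> j; rewrite Px /= mxE mul0r.
Qed.

Lemma dim1 (V : vectType F) (D : {vspace V}) : \dim D = 1%N ->
  exists (z : V) (c : V -> F), z != 0 /\ flin c /\ forall w, w \in D -> w = c w *: z.
Proof.
move=> d1.
have [b bD] : exists b : 1.-tuple V, basis_of D b.
  rewrite -d1; exists (vbasis D); exact: vbasisP.
exists b`_0, (coord b ord0); split; [|split].
- by apply: (basis_not0 bD); apply: mem_nth; rewrite size_tuple.
- by move=> a u v; rewrite linearP.
- by move=> w /(coord_basis bD) {1}->; rewrite big_ord1.
Qed.

Lemma dim0 (V : vectType F) (D : {vspace V}) : \dim D = 0%N -> forall w, w \in D -> w = 0.
Proof. by move=> /eqP; rewrite dimv_eq0 => /eqP -> w; rewrite memv0 => /eqP. Qed.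
End Str.

Section Even.
Variable F : fieldType.

Lemma even_dir (V0 V1 : vectType F) (L : liesuper V0 V1) (k l : nat) D0 D1 :
  (2%:R : F) != 0 -> (3%:R : F) != 0 -> is_liesuper L -> nilpotent L ->
  \dim (fullv : {vspace V0}) = k -> \dim (fullv : {vspace V1}) = l ->
  is_derived L D0 D1 -> \dim D0 = 1%N -> \dim D1 = 0%N -> capable L ->
  isomorphic L (dsum (Heis F 1 0) (Aab F (k - 3) l)).
Proof.
move=> h2 h3 HL nL dk dl [[c00 [c11 c01]] dmin] d0 d1 cap.
have b01 u y : br01 L u y = 0 := dim0 d1 (c01 u y).
have [z [c [z0 [cl cz]]]] := dim1 d0.
pose om u v := c (br00 L u v); pose be y y' := c (br11 L y y').
have b00 u v : br00 L u v = om u v *: z := cz _ (c00 u v).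
have b11 y y' : br11 L y y' = be y y' *: z := cz _ (c11 y y').
have [W0 [W1 [H [HH [g0 [g1 [hg [s0 [s1 [k0 k1]]]]]]]]]] := cap.
have bediag y : be y y = 0 := even_beta HH hg s0 s1 k0 k1 h3 z0 b01 b11 y.
have b11' y y' : br11 L y y' = 0.
  have e := b11 (y + y') (y + y'); rewrite bediag scale0r in e.
  rewrite b11Dl // !b11Dr // (b11 y y) (b11 y' y') !bediag !scale0r add0r addr0 in e.
  rewrite (sy11 HL y' y) -mulr2n -scaler_nat in e.
  by move/eqP: e; rewrite scaler_eq0 (negPf h2) /= => /eqP.
have skew u v : om u v = - om v u by rewrite /om (sk00 HL) (flinN cl).
have [zt hz] := s0 z.
have Pl0 := pl_main HH hg s0 k0 k1 hz b01 b00 skew z0.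
have omz v : om z v = 0.
  apply: (@nilp_eig _ _ _ L HL (z, 0) (v, 0)) => //.
    by apply/eqP => e; move/eqP: z0; apply; exact: (congr1 fst e).
  apply: injective_projections; rewrite /brp /= ?b00 ?b11' ?b01 ?addr0 ?subr0 //.
  by rewrite scaler0.
have [u [v uv]] : exists u v, om u v != 0.
  apply: NNPP => hn.
  have om0 u v : om u v = 0.
    by apply/eqP/negPn/negP => h; apply: hn; exists u, v.
  have [s _] : (D0 <= 0)%VS /\ (D1 <= 0)%VS.
    apply: dmin; split; first by move=> x x'; rewrite b00 om0 scale0r mem0v.
    split; first by move=> y y'; rewrite b11' mem0v.
    by move=> x y; rewrite b01 mem0v.
  by have := dimvS s; rewrite dimv0 d0.
have omL w : flin (fun a => om a w).
  by move=> s a b; rewrite /om; have := l00l HL w s a b; rewrite /= => ->; rewrite cl.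
have omR w : flin (om w).
  by move=> s a b; rewrite /om (l00r HL w s a b) cl.
have omd w : om w w = 0.
  have := skew w w; move/eqP; rewrite -addr_eq0 -mulr2n -mulr_natl mulf_eq0 (negPf h2) /=.
  by move/eqP.
pose x2 := (om u v)^-1 *: v.
have o12 : om u x2 = 1 by rewrite /x2 (flinZ (omR u)) mulVf.
pose f1 w := om w x2; pose f2 w := om u w.
have omE a b : om a b = f1 a * f2 b - f2 a * f1 b.
  have := Pl0 a b u x2; rewrite /Pl o12 mulr1 /f1 /f2 (skew u b) (skew u a) => e.
  by rewrite -[om a b]subr0 -e; ring.
have f1z : f1 z = 0 by rewrite /f1 omz.
have f2z : f2 z = 0 by rewrite /f2 skew omz oppr0.
pose xs2 (i : 'I_2) := if val i == 0%N then u else x2.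
pose fs2 (i : 'I_2) := if val i == 0%N then f1 else f2.
have fs2l i : flin (fs2 i) by rewrite /fs2; case: ifP => _; [exact: omL|exact: omR].
have fs2d i j : fs2 i (xs2 j) = (i == j)%:R.
  by case: i j => [[|[|i]] Hi] [[|[|j]] Hj] //=; rewrite /fs2 /xs2 /f1 /f2 /= omd.
have [f3 [f3l [f3z f3x]]] : exists h : V0 -> F, flin h /\ h z = 1 /\ forall j, h (xs2 j) = 0.
  apply: (extra_fun fs2l fs2d z0) => i; rewrite /fs2; case: ifP => _ //.
pose xs3 (i : 'I_(1 + 1 + 1)) := if val i == 0%N then u else if val i == 1%N then x2 else z.
pose fs3 (i : 'I_(1 + 1 + 1)) := if val i == 0%N then f1 else if val i == 1%N then f2 else f3.
have f3u : f3 u = 0 by have := f3x ord0.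
have f3x2 : f3 x2 = 0 by have := f3x (@Ordinal 2 1 isT).
have fs3l i : flin (fs3 i).
  by rewrite /fs3; case: ifP => _; [exact: omL|case: ifP => _; [exact: omR|exact: f3l]].
have fs3d i j : fs3 i (xs3 j) = (i == j)%:R.
  by case: i j => [[|[|[|i]]] Hi] [[|[|[|j]]] Hj] //=; rewrite /fs3 /xs3 /f1 /f2 /= ?omd ?f3u ?f3x2 ?f3z ?omz //.
have le3 := dual_le fs3l fs3d; rewrite dk in le3.
have hd3 : ((1 + 1 + 1) + (k - 3))%N = \dim (fullv : {vspace V0}) by rewrite dk subnKC.
have [P0 [P0l [P0b [P01 P0x]]]] := dual_iso fs3l fs3d hd3.
have zl : forall i : 'I_0, flin (fun _ : V1 => 0 : F) by move=> i a b b'; rewrite mulr0 addr0.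
have zd : forall i j : 'I_0, (fun _ _ => 0 : F) i ((fun _ => 0 : V1) j) = (i == j)%:R by case.
have [P1 [P1l [P1b _]]] := @dual_iso _ V1 0 l (fun _ => 0) (fun _ _ => 0) zl zd (esym dl).
have Pz : P0 z = (delta_mx ord0 ez, 0) := P0x ez.
exists P0, P1; split; last by [].
split; first exact: P0l.
split; first exact: P1l.
split.
  move=> a b; rewrite b00 (linZ P0l) Pz M00 /om3 !P01 /= omE.
  by apply: injective_projections => /=; rewrite ?scaler0.
split; first by move=> a y; rewrite b01 (lin0 P1l) M01.
by move=> y y'; rewrite b11' (lin0 P0l) M11.
Qed.
End Even.

Section Odd.
Variable F : fieldType.

Lemma odd_dir (V0 V1 : vectType F) (L : liesuper V0 V1) (k l : nat) D0 D1 :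
  (2%:R : F) != 0 -> is_liesuper L -> nilpotent L ->
  \dim (fullv : {vspace V0}) = k -> \dim (fullv : {vspace V1}) = l ->
  is_derived L D0 D1 -> \dim D0 = 0%N -> \dim D1 = 1%N -> capable L ->
  isomorphic L (dsum (Hm F 1) (Aab F (k - 1) (l - 2))).
Proof.
move=> h2 HL nL dk dl [[c00 [c11 c01]] dmin] d0 d1 cap.
have b00 u v : br00 L u v = 0 := dim0 d0 (c00 u v).
have b11 y y' : br11 L y y' = 0 := dim0 d0 (c11 y y').
have [z [c [z0 [cl cz]]]] := dim1 d1.
pose B u w := c (br01 L u w).
have b01 u w : br01 L u w = B u w *: z := cz _ (c01 u w).
have [W0 [W1 [H [HH [g0 [g1 [hg [s0 [s1 [k0 k1]]]]]]]]]] := cap.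
have [zt hz] := s1 z.
have mino := od_main HH hg s0 s1 k0 k1 hz b00 b11 b01 h2 z0.
have Bz v : B v z = 0.
  apply/eqP; rewrite -oppr_eq0; apply/eqP.
  apply: (@nilp_eig _ _ _ L HL (0, z) (v, 0)) => //.
    by apply/eqP => e; move/eqP: z0; apply; exact: (congr1 snd e).
  apply: injective_projections; rewrite /brp /= ?b00 ?b11 ?addr0 ?scaler0 //.
  have -> : br01 L 0 0 = 0 by apply: (lin0 (l01r HL _)).
  by rewrite b01 sub0r scaleNr.
have [x0 [y0 uv]] : exists u v, B u v != 0.
  apply: NNPP => hn.
  have B0 u v : B u v = 0.
    by apply/eqP/negPn/negP => h; apply: hn; exists u, v.
  have [_ s] : (D0 <= 0)%VS /\ (D1 <= 0)%VS.
    apply: dmin; split; first by move=> x x'; rewrite b00 mem0v.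
    split; first by move=> y y'; rewrite b11 mem0v.
    by move=> x y; rewrite b01 B0 scale0r mem0v.
  by have := dimvS s; rewrite dimv0 d1.
have BL w : flin (fun a => B a w).
  by move=> s a b; rewrite /B; have := l01l HL w s a b; rewrite /= => ->; rewrite cl.
have BR w : flin (B w).
  by move=> s a b; rewrite /B (l01r HL w s a b) cl.
pose y1 := (B x0 y0)^-1 *: y0.
have o1 : B x0 y1 = 1 by rewrite /y1 (flinZ (BR x0)) mulVf.
pose f u := B u y1; pose g w := B x0 w.
have BE u w : B u w = f u * g w.
  by have := mino u x0 w y1; rewrite o1 mulr1 /f /g => ->.
have gz : g z = 0 by rewrite /g Bz.
have f0l : forall i : 'I_1, flin ((fun _ => f) i) by move=> i; exact: BL.
have f0d : forall i j : 'I_1, (fun _ => f) i ((fun _ => x0) j) = (i == j)%:R.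
  by move=> i j; rewrite !ord1 eqxx.
have le1 := dual_le f0l f0d; rewrite dk in le1.
have hd1 : (1 + (k - 1))%N = \dim (fullv : {vspace V0}) by rewrite dk subnKC.
have [P0 [P0l [P0b [P01 P0x]]]] := dual_iso f0l f0d hd1.
have g0l : forall i : 'I_1, flin ((fun _ => g) i) by move=> i; exact: BR.
have g0d : forall i j : 'I_1, (fun _ => g) i ((fun _ => y1) j) = (i == j)%:R.
  by move=> i j; rewrite !ord1 eqxx.
have [h [hl [hz1 hx]]] := extra_fun g0l g0d z0 (fun _ => gz).
have hy1 : h y1 = 0 by have := hx ord0.
pose xs (i : 'I_(1 + 1)) := if val i == 0%N then y1 else z.
pose fs (i : 'I_(1 + 1)) := if val i == 0%N then g else h.
have fsl i : flin (fs i) by rewrite /fs; case: ifP => _; [exact: BR|exact: hl].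
have fsd i j : fs i (xs j) = (i == j)%:R.
  by case: i j => [[|[|i]] Hi] [[|[|j]] Hj] //=; rewrite /fs /xs /g /= ?o1 ?gz ?hy1 ?hz1.
have le2 := dual_le fsl fsd; rewrite dl in le2.
have hd2 : ((1 + 1) + (l - 2))%N = \dim (fullv : {vspace V1}) by rewrite dl subnKC.
have [P1 [P1l [P1b [P11 P1x]]]] := dual_iso fsl fsd hd2.
have Pz : P1 z = (delta_mx ord0 ezz, 0) := P1x ezz.
exists P0, P1; split; last by [].
split; first exact: P0l.
split; first exact: P1l.
split; first by move=> a b; rewrite b00 (lin0 P0l) N00.
split.
  move=> a w; rewrite b01 (linZ P1l) Pz N01 P01 P11 /= BE.
  by apply: injective_projections => /=; rewrite ?scaler0.
by move=> y y'; rewrite b11 (lin0 P0l) N11.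
Qed.
End Odd.

Unset Implicit Arguments. Set Strict Implicit.

Theorem mainTheorem1 (F : fieldType) (V0 V1 : vectType F)
    (L : liesuper V0 V1) (k l r s : nat) :
  ~~ (2%N \in [pchar F]) -> ~~ (3%N \in [pchar F]) ->
  is_liesuper L -> nilpotent L ->
  \dim (fullv : {vspace V0}) = k -> \dim (fullv : {vspace V1}) = l ->
  (exists (D0 : {vspace V0}) (D1 : {vspace V1}),
      is_derived L D0 D1 /\ \dim D0 = r /\ \dim D1 = s) ->
  (r + s = 1)%N ->
  capable L <->
  (isomorphic L (dsum (Heis F 1 0) (Aab F (k - 3) l)) \/
   isomorphic L (dsum (Hm F 1) (Aab F (k - 1) (l - 2)))).
Proof.
move=> c2 c3 HL nL dk dl [D0 [D1 [der [dr ds]]]] rs.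
have h2 := char2 c2; have h3 := char3 c3.
split.
  move=> cap; case: r s rs dr ds => [|[|r]] [|[|s]] //= _ dr ds.
    by right; apply: (odd_dir h2 HL nL dk dl der dr ds cap).
  by left; apply: (even_dir h2 h3 HL nL dk dl der dr ds cap).
case=> iso; apply: (cap_iso iso).
  exact: cap_M1.
exact: cap_M2.
Qed.
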